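(* Let $d\ge2$, $\alpha\in(0,\infty)^d$, $N\in\mathbb Z_+$. For every $0\le m\le N$ and all $r,s\in N\Delta_{(d-1)}$, $$\xi^{H,\alpha}_m(r,s)=\sum_{l=0}^{m}b_{ml}\,\chi^{H,\alpha}_l(r,s),\qquad b_{ml}=\sum_{n=l}^{m}\left(\frac{N_{[n]}}{(|\alpha|+N)_{(n)}}\right)^2\frac{m_{[n]}}{(|\alpha|+m)_{(n)}}\,a^{|\alpha|}_{nl}.$$
   Context: $N\Delta_{(d-1)}=\{r\in\mathbb Z_+^d:|r|=N\}$, $|v|=\sum_iv_i$. $(c)_{(k)}=\Gamma(c+k)/\Gamma(c)$, $c_{[k]}=c(c-1)\cdots(c-k+1)$. $DM_\beta(l;M)=\binom{M}{l}\prod_i(\beta_i)_{(l_i)}/(|\beta|)_{(M)}$ for $l\in\mathbb Z_+^d$ with $|l|=M$. $\xi^{H,\alpha}_m(r,s)=\sum_{|l|=m}DM_{\alpha+r}(l;m)DM_{\alpha+s}(l;m)/DM_\alpha(l;m)$. $\chi^{H,\alpha}_m(r,s)=\sum_{|l|=m}\frac{1}{DM_\alpha(l;m)}\frac{\binom{m}{l}p_l(r)}{N_{[m]}}\frac{\binom{m}{l}p_l(s)}{N_{[m]}}$ with $p_l(r)=\prod_i(r_i)_{[l_i]}$. $a^{\theta}_{nm}=(\theta+2n-1)(-1)^{n-m}\frac{(\theta+m)_{(n-1)}}{m!(n-m)!}$ for $0\le m\le n$ (with $a^\theta_{00}=1$). *)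

(* Defs.v *)
(* Parameters alpha_i live in an arbitrary real field R
   (covers the real numbers; the identity is purely algebraic). *)
From HB Require Import structures.
From mathcomp Require Import all_boot all_order all_algebra.
Set Implicit Arguments. Unset Strict Implicit. Unset Printing Implicit Defensive.
Import Order.TTheory GRing.Theory Num.Theory.
Local Open Scope ring_scope.

Section Defs.
Variable R : realFieldType.
Variable d : nat.

Definition rising (c : R) (k : nat) : R := \prod_(i < k) (c + i%:R).

(* compositions l in Z_+^d with |l| = M, encoded as finite functions into 'I_(M+1) *)
Definition is_comp (M : nat) (l : {ffun 'I_d -> 'I_M.+1}) : bool :=
  (\sum_(i < d) (l i : nat))%N == M.

Definition multinom (M : nat) (l : 'I_d -> nat) : R :=
  (M`!)%:R / \prod_(i < d) ((l i)`!)%:R.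

Definition DM (beta : 'I_d -> R) (M : nat) (l : 'I_d -> nat) : R :=
  multinom M l * (\prod_(i < d) rising (beta i) (l i)) / rising (\sum_(i < d) beta i) M.

Definition pl (l r : 'I_d -> nat) : R := \prod_(i < d) ((r i) ^_ (l i))%:R.

Definition shift (alpha : 'I_d -> R) (r : 'I_d -> nat) : 'I_d -> R :=
  fun i => alpha i + (r i)%:R.

Definition xiH (alpha : 'I_d -> R) (m : nat) (r s : 'I_d -> nat) : R :=
  \sum_(l : {ffun 'I_d -> 'I_m.+1} | is_comp l)
     DM (shift alpha r) m (fun i => l i) * DM (shift alpha s) m (fun i => l i)
     / DM alpha m (fun i => l i).

Definition chiH (alpha : 'I_d -> R) (N m : nat) (r s : 'I_d -> nat) : R :=
  \sum_(l : {ffun 'I_d -> 'I_m.+1} | is_comp l)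
     (DM alpha m (fun i => l i))^-1
     * (multinom m (fun i => l i) * pl (fun i => l i) r / (N ^_ m)%:R)
     * (multinom m (fun i => l i) * pl (fun i => l i) s / (N ^_ m)%:R).

Definition acoef (theta : R) (n m : nat) : R :=
  if n is 0 then 1 else
  (theta + (2 * n)%:R - 1) * (-1) ^+ (n - m) * rising (theta + m%:R) (n - 1)
    / ((m`!)%:R * ((n - m)`!)%:R).

Definition bcoef (alpha : 'I_d -> R) (N m l : nat) : R :=
  let a := \sum_(i < d) alpha i in
  \sum_(l <= n < m.+1)
     ((N ^_ n)%:R / rising (a + N%:R) n) ^+ 2
     * ((m ^_ n)%:R / rising (a + m%:R) n) * acoef a n l.

End Defs.

(* Main.v *)
Require Import Defs.
From HB Require Import structures.
From mathcomp Require Import all_boot all_order all_algebra.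
Import Order.TTheory GRing.Theory Num.Theory.
Local Open Scope ring_scope.
From Stdlib Require Import Ring Field.
Set Implicit Arguments. Unset Strict Implicit. Unset Printing Implicit Defensive.

Section Main.
Variable R : realFieldType.

Local Notation Rs := (GRing.PzSemiRing.sort (Num_RealField__to__GRing_PzSemiRing R)).
Lemma FT : @field_theory Rs
 (@Algebra.zero (Num_RealField__to__Algebra_BaseAddUMagma R))
 (GRing.one (Num_RealField__to__GRing_PzSemiRing R))
 (@Algebra.add (Num_RealField__to__Algebra_BaseAddMagma R))
 (@GRing.mul (Num_RealField__to__GRing_PzSemiRing R))
 (fun x y => @Algebra.add (Num_RealField__to__Algebra_BaseAddMagma R) x (@Algebra.opp (Num_RealField__to__Algebra_BaseZmodule R) y))
 (@Algebra.opp (Num_RealField__to__Algebra_BaseZmodule R))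
 (fun x y => @GRing.mul (Num_RealField__to__GRing_PzSemiRing R) x (@GRing.inv (Num_RealField__to__GRing_UnitRing R) y))
 (@GRing.inv (Num_RealField__to__GRing_UnitRing R))
 (@eq Rs).
Proof.
split.
- split=> *; [exact: add0r|exact: addrC|exact: addrA|exact: mul1r|exact: mulrC|exact: mulrA|exact: mulrDl|by []|exact: subrr].
- by apply/eqP; rewrite oner_eq0.
- by [].
- by move=> p /eqP hp; rewrite mulVf.
Qed.
Add Field Rfield : FT.

Lemma rpre (x y : R) : x * 1 = y * 1 -> x = y.
Proof. by rewrite !mulr1. Qed.

Ltac rnorm :=
 rewrite ?mulr1n ?mulr0n;
 try rewrite -[@Algebra.add _]/(@Algebra.add (Num_RealField__to__Algebra_BaseAddMagma R));
 try rewrite -[@GRing.mul _]/(@GRing.mul (Num_RealField__to__GRing_PzSemiRing R));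
 try rewrite -[@Algebra.opp _]/(@Algebra.opp (Num_RealField__to__Algebra_BaseZmodule R));
 try rewrite -[@Algebra.zero _]/(@Algebra.zero (Num_RealField__to__Algebra_BaseAddUMagma R));
 try rewrite -[GRing.one _]/(GRing.one (Num_RealField__to__GRing_PzSemiRing R));
 try rewrite -[@GRing.inv _]/(@GRing.inv (Num_RealField__to__GRing_UnitRing R));
 try rewrite -[@Algebra.natmul _]/(@Algebra.natmul (GRing_PzSemiRing__to__Algebra_BaseAddUMagma (Num_RealField__to__GRing_PzSemiRing R)));
 try rewrite -[@GRing.exp _]/(@GRing.exp (Num_RealField__to__GRing_PzSemiRing R)).
Ltac rng := apply: rpre; rnorm; ring.
Ltac fld := apply: rpre; rnorm; field.

Lemma rising0 (c : R) : rising c 0 = 1.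
Proof. by rewrite /rising big_ord0. Qed.

Lemma risingS (c : R) k : rising c k.+1 = rising c k * (c + k%:R).
Proof. by rewrite /rising big_ord_recr. Qed.

Lemma risingSl (c : R) k : rising c k.+1 = c * rising (c + 1) k.
Proof.
rewrite /rising big_ord_recl addr0; congr (_ * _); apply: eq_bigr => i _.
by rewrite /= -natr1 addrA [_ + 1]addrC addrA [1 + _]addrC.
Qed.

Lemma risingSl' (c : R) n k : rising (c + n%:R) k.+1 = (c + n%:R) * rising (c + n.+1%:R) k.
Proof. by rewrite risingSl -natr1 addrA. Qed.

Lemma rising_add (c : R) j n : rising c (j + n) = rising c j * rising (c + j%:R) n.
Proof.
elim: n => [|n IH]; first by rewrite addn0 rising0 mulr1.
by rewrite addnS !risingS IH natrD addrA mulrA.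
Qed.

Lemma rising_gt0 (c : R) k : 0 < c -> 0 < rising c k.
Proof. move=> hc; apply: prodr_gt0 => i _; exact: ltr_wpDr. Qed.

Lemma rising_neq0 (c : R) k : 0 < c -> rising c k != 0.
Proof. by move=> hc; apply: lt0r_neq0; apply: rising_gt0. Qed.

Definition pst (a : R) (r s k j : nat) : R :=
  'C(k, j)%:R * (r ^_ j)%:R * (s ^_ j)%:R * rising (a + j%:R) (k - j)
   * rising (a + r%:R + s%:R) (k - j).

Definition psG (a : R) (r s k j : nat) : R :=
  if j is jj.+1 then
    - ('C(k, jj)%:R * (r ^_ j)%:R * (s ^_ j)%:R * rising (a + jj%:R) (k - jj)
       * rising (a + r%:R + s%:R) (k - jj))
  else 0.

Lemma pst_step (a : R) r s k j : (j <= k.+1)%N ->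
  pst a r s k.+1 j - (a + r%:R + k%:R) * (a + s%:R + k%:R) * pst a r s k j
  = psG a r s k j.+1 - psG a r s k j.
Proof.
move=> hj; rewrite /pst /psG.
case: j hj => [|jj] hj.
  rewrite !bin0 !ffactn0 !ffactn1 !subn0 !addr0 !risingS /=.
  rng.
case: (ltngtP jj k) => hjk; last first.
-
  subst jj; rewrite subnn !(bin_small (ltnSn k)) !binn !subnn !rising0.
  rng.
- by move: hj; rewrite ltnS leqNgt hjk.
have [K hK] : exists K, k = (jj.+1 + K)%N by exists (k - jj.+1)%N; rewrite subnKC.
subst k.
have e1 : ((jj.+1 + K).+1 - jj.+1 = K.+1)%N by rewrite subSn ?leq_addr // addKn.
have e2 : (jj.+1 + K - jj.+1 = K)%N by rewrite addKn.
have e3 : (jj.+1 + K - jj = K.+1)%N by rewrite addSn subSn ?leq_addr // addKn.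
rewrite e1 e2 e3 binS natrD [rising (a + jj%:R) _]risingSl' !risingS.
have hb : ('C(jj.+1 + K, jj.+1))%:R * (jj.+1)%:R = ('C(jj.+1 + K, jj))%:R * (K.+1)%:R :> R.
  by rewrite -!natrM mulnC mul_bin_left e3 mulnC.
set C1 := ('C(_, jj.+1))%:R in hb *; set C0 := ('C(_, jj))%:R in hb *.
have [hr | hr] := leqP jj.+1 r; last first.
  by rewrite (ffact_small hr) (ffact_small (leqW hr)); rng.
have [hs | hs] := leqP jj.+1 s; last first.
  by rewrite (ffact_small hs) (ffact_small (leqW hs)); rng.
have hr2 : (r ^_ jj.+2)%:R = (r ^_ jj.+1)%:R * (r%:R - (jj.+1)%:R) :> R.
  by rewrite [in LHS]ffactnSr natrM (natrB _ hr).
have hs2 : (s ^_ jj.+2)%:R = (s ^_ jj.+1)%:R * (s%:R - (jj.+1)%:R) :> R.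
  by rewrite [in LHS]ffactnSr natrM (natrB _ hs).
rewrite hr2 hs2 natrD.
set A := rising _ K; set E := rising _ K.
set u := (r ^_ _)%:R; set v := (s ^_ _)%:R.
rewrite -[(jj.+1)%:R]natr1 -[(K.+1)%:R]natr1 in hb *.
set J := jj%:R; set KK := K%:R; set rr := r%:R; set ss := s%:R.
apply/eqP; rewrite -subr_eq0; apply/eqP.
transitivity ((a + rr + ss + KK) * u * v * A * E * (C0 * (KK + 1) - C1 * (J + 1))).
  rng.
by rewrite hb subrr mulr0.
Qed.

Lemma PS (a : R) r s k :
  rising (a + r%:R) k * rising (a + s%:R) k = \sum_(j < k.+1) pst a r s k j.
Proof.
elim: k => [|k IH].
  by rewrite big_ord1 /pst !rising0 bin0 !ffactn0 mulr1 !mul1r.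
set c := (a + r%:R + k%:R) * (a + s%:R + k%:R).
have h0 : \sum_(j < k.+2) (pst a r s k.+1 j - c * pst a r s k j) = 0.
  rewrite (eq_bigr (fun j : 'I_k.+2 => psG a r s k j.+1 - psG a r s k j)); last first.
    by move=> j _; apply: pst_step; rewrite -ltnS.
  rewrite -(big_mkord (fun _ => true) (fun j => psG a r s k j.+1 - psG a r s k j)).
  by rewrite telescope_sumr // /psG (bin_small (ltnSn k)) !mul0r oppr0 addr0.
have h1 : \sum_(j < k.+2) pst a r s k j = \sum_(j < k.+1) pst a r s k j.
  by rewrite big_ord_recr /= {2}/pst (bin_small (ltnSn k)) !mul0r addr0.
move/eqP: h0; rewrite sumrB subr_eq0 -mulr_sumr h1 -IH => /eqP ->.
rewrite !risingS /c; rng.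
Qed.

Definition vt (x y : R) (n j : nat) : R := 'C(n, j)%:R * rising x j * rising y (n - j).
Definition vG (x y : R) (n j : nat) : R :=
  if j is jj.+1 then 'C(n, jj)%:R * rising x j * rising y (n - jj) else 0.

Lemma vt_step (x y : R) n j : (j <= n.+1)%N ->
  vt x y n.+1 j - (x + y + n%:R) * vt x y n j = vG x y n j - vG x y n j.+1.
Proof.
move=> hj; rewrite /vt /vG.
case: j hj => [|jj] hj.
  by rewrite !bin0 !subn0 !risingS !rising0; rng.
case: (ltngtP jj n) => hjk; last first.
- subst jj; rewrite !subnn !(bin_small (ltnSn n)) !binn !rising0; rng.
- by move: hj; rewrite ltnS leqNgt hjk.
have [K hK] : exists K, n = (jj.+1 + K)%N by exists (n - jj.+1)%N; rewrite subnKC.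
subst n.
have e1 : ((jj.+1 + K).+1 - jj.+1 = K.+1)%N by rewrite subSn ?leq_addr // addKn.
have e2 : (jj.+1 + K - jj.+1 = K)%N by rewrite addKn.
have e3 : (jj.+1 + K - jj = K.+1)%N by rewrite addSn subSn ?leq_addr // addKn.
rewrite e1 e2 e3 binS natrD !risingS [(_ + K)%:R]natrD.
rng.
Qed.

Lemma vand (x y : R) n :
  rising (x + y) n = \sum_(j < n.+1) 'C(n, j)%:R * rising x j * rising y (n - j).
Proof.
elim: n => [|n IH].
  by rewrite big_ord1 !rising0 bin0 mulr1 mul1r.
set c := x + y + n%:R.
have h0 : \sum_(j < n.+2) (vt x y n.+1 j - c * vt x y n j) = 0.
  rewrite (eq_bigr (fun j : 'I_n.+2 => - (vG x y n j.+1 - vG x y n j))); last first.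
    by move=> j _; rewrite opprB; apply: vt_step; rewrite -ltnS.
  rewrite sumrN -(big_mkord (fun _ => true) (fun j => vG x y n j.+1 - vG x y n j)).
  by rewrite telescope_sumr // /vG (bin_small (ltnSn n)) !mul0r subr0 oppr0.
have h1 : \sum_(j < n.+2) vt x y n j = \sum_(j < n.+1) vt x y n j.
  by rewrite big_ord_recr /= {2}/vt (bin_small (ltnSn n)) !mul0r addr0.
move/eqP: h0; rewrite sumrB subr_eq0 -mulr_sumr h1.
rewrite /vt -IH => /eqP ->.
by rewrite risingS /c mulrC.
Qed.

Definition Dsum (L : nat) (x : R) (K : nat) : R :=
  \sum_(j < L.+1) (-1) ^+ j * 'C(L, j)%:R * rising (x + j%:R) K.

Lemma Dstep L x K : Dsum L.+1 x K = Dsum L x K - Dsum L (x + 1) K.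
Proof.
rewrite /Dsum big_ord_recl [in X in _ = X - _]big_ord_recl /=.
rewrite [\sum_(i < L.+1) _](eq_bigr (fun i : 'I_L.+1 =>
   (-1) ^+ i.+1 * 'C(L, i.+1)%:R * rising (x + i.+1%:R) K +
   - ((-1) ^+ i * 'C(L, i)%:R * rising (x + 1 + i%:R) K))); last first.
  move=> i _; rewrite /bump /= add1n binS natrD exprS.
  rewrite -[(i.+1)%:R]natr1 [x + 1 + _]addrAC addrA; rng.
rewrite big_split /= big_ord_recr /= (bin_small (ltnSn L)) mulr0 mul0r addr0.
rewrite sumrN addrA; congr (_ - _).
rewrite addr0 !bin0; congr (_ + _); apply: eq_bigr => i _; by rewrite /bump /= add1n.
Qed.

Lemma Ddiff L x K : Dsum L x K.+1 - Dsum L (x + 1) K.+1 = - (K.+1%:R) * Dsum L (x + 1) K.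
Proof.
rewrite /Dsum -sumrB mulr_sumr; apply: eq_bigr => j _.
rewrite risingSl addrAC !risingS.
rewrite -[(K.+1)%:R]natr1; rng.
Qed.

Lemma Dzero L x K : (K < L)%N -> Dsum L x K = 0.
Proof.
elim: L x K => [|L IH] x K //.
rewrite ltnS => hK; rewrite Dstep.
case: K hK => [|K] hK.
  by rewrite /Dsum -sumrB big1 // => j _; rewrite !rising0 subrr.
by rewrite Ddiff IH ?mulr0 // ltnW.
Qed.

Lemma ffactD n j t : (n ^_ (j + t) = n ^_ j * (n - j) ^_ t)%N.
Proof.
elim: t => [|t IH]; first by rewrite addn0 ffactn0 muln1.
by rewrite addnS !ffactnSr IH subnDA mulnA.
Qed.

Lemma nat2 (j : nat) : (2 * j)%:R = j%:R + j%:R :> R.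
Proof. by rewrite mul2n -addnn natrD. Qed.

Lemma fact_neq0 n : (n`!)%:R != 0 :> R.
Proof. by rewrite pnatr_eq0 -lt0n fact_gt0. Qed.

Lemma sgnB L t : (t <= L)%N -> (-1) ^+ (L - t) = (-1) ^+ L * (-1) ^+ t :> R.
Proof.
move=> ht; rewrite -[in RHS](subnK ht) exprD -mulrA -expr2 sqrr_sign mulr1 //.
Qed.

Definition cc (th : R) (i j : nat) : R := (i ^_ j)%:R / rising (th + i%:R) j.

Lemma acc_diag (th : R) i : 0 < th -> acoef th i i * cc th i i = 1.
Proof.
move=> hth; rewrite /acoef /cc; case: i => [|i].
  by rewrite ffactn0 rising0 mul1r divr1.
rewrite subnn subn1 /= expr0 mulr1 ffactnn fact0 mulr1.
rewrite risingS nat2 -[(i.+1)%:R]natr1.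
have h1 : rising (th + (i%:R + 1)) i != 0 by apply: rising_neq0; rewrite ltr_wpDr // addr_ge0.
have h2 : th + (i%:R + 1) + i%:R != 0.
  by apply: lt0r_neq0; rewrite ltr_wpDr // ltr_wpDr // addr_ge0.
have h3 := fact_neq0 i.+1.
move: h1 h2 h3; set A := rising _ i; set f := (i.+1)`!%:R => h1 h2 h3.
fld; repeat split; try (by apply/eqP).
Qed.

Lemma acoefS (th : R) n m : acoef th n.+1 m =
  (th + (2 * n.+1)%:R - 1) * (-1) ^+ (n.+1 - m) * rising (th + m%:R) n
   / ((m`!)%:R * ((n.+1 - m)`!)%:R).
Proof. by rewrite /acoef subSS subn0. Qed.

Lemma acc_term (th : R) j L t : 0 < th -> (t <= L.+1)%N ->
  acoef th (j + L.+1) (t + j) * cc th (t + j) j =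
  (th + (2 * (j + L.+1))%:R - 1) / (L.+1)`!%:R *
   ((-1) ^+ (L.+1 - t) * 'C(L.+1, t)%:R * rising (th + (2 * j)%:R + t%:R) L).
Proof.
move=> hth ht; rewrite addnS acoefS /cc.
have e : ((j + L).+1 - (t + j) = L.+1 - t)%N by rewrite -addnS addnC subnDr.
rewrite e rising_add.
have e2 : th + (t + j)%:R + j%:R = th + (2 * j)%:R + t%:R by rewrite nat2 !natrD; rng.
rewrite e2.
have ef : ((t + j)`! = (t + j) ^_ j * t`!)%N.
  by rewrite -(ffact_fact (leq_addl t j)) addnK.
rewrite ef -(bin_fact ht) !natrM.
have h1 : rising (th + (t + j)%:R) j != 0.
  by apply: rising_neq0; rewrite ltr_wpDr.
have h2 : ((t + j) ^_ j)%:R != 0 :> R by rewrite pnatr_eq0 -lt0n ffact_gt0 leq_addl.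
have h3 := fact_neq0 t.
have h4 := fact_neq0 (L.+1 - t).
have h5 : ('C(L.+1, t))%:R != 0 :> R by rewrite pnatr_eq0 -lt0n bin_gt0.
move: h1 h2 h3 h4 h5.
set A := rising (th + (t + j)%:R) j; set B := ((t + j) ^_ j)%:R.
set C := (t`!)%:R; set D := ((L.+1 - t)`!)%:R; set E := 'C(L.+1, t)%:R.
move=> h1 h2 h3 h4 h5.
fld; repeat split; try (by apply/eqP).
Qed.

Lemma cc_small (th : R) k j : (k < j)%N -> cc th k j = 0.
Proof. by move=> h; rewrite /cc ffact_small // mul0r. Qed.

Lemma AC_entry (th : R) M (i j : 'I_M) : 0 < th ->
  \sum_(k < M) (if (k <= i)%N then acoef th i k else 0) * cc th k j = (i == j)%:R.
Proof.
move=> hth.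
have [hij|hij|hij] := ltngtP i j.
- rewrite big1; last first.
    move=> k _; case: ifP => hk; last by rewrite mul0r.
    by rewrite cc_small ?mulr0 // (leq_ltn_trans hk hij).
  by rewrite (_ : (i == j) = false) //; apply/negbTE; rewrite -val_eqE /= neq_ltn hij.
- rewrite -(big_mkord xpredT (fun k => (if (k <= i)%N then acoef th i k else 0) * cc th k j)).
  have hiM : (i < M)%N := ltn_ord i.
  rewrite (big_cat_nat (leq0n j)) /=; last by rewrite (leq_trans (ltnW hij)) // ltnW.
  rewrite big1_seq ?add0r; last first.
    move=> k /andP [_]; rewrite mem_index_iota => /andP [_ hk].
    by rewrite cc_small ?mulr0.
  rewrite (big_cat_nat (leqW (ltnW hij)) hiM) /=.
  rewrite [X in _ + X]big1_seq ?addr0; last first.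
    move=> k /andP [_]; rewrite mem_index_iota => /andP [hk _].
    by rewrite leqNgt hk mul0r.
  rewrite (_ : (i == j) = false); last by apply/negbTE; rewrite -val_eqE /= neq_ltn hij orbT.
  have [L hL] : exists L, val i = (j + L.+1)%N.
    by exists (i - j.+1)%N; rewrite addnS -addSn subnKC.
  rewrite -{1}(add0n j) big_addn hL.
  have -> : ((j + L.+1).+1 - j = L.+2)%N by rewrite -addnS addKn.
  set c := (th + (2 * (j + L.+1))%:R - 1) / (L.+1)`!%:R.
  rewrite (eq_big_nat _ _ (F2 := fun t => c * (-1) ^+ (L.+1) *
     ((-1) ^+ t * 'C(L.+1, t)%:R * rising (th + (2 * j)%:R + t%:R) L))); last first.
    move=> t /andP [_ ht].
    rewrite ifT; last by rewrite addnC leq_add2l.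
    rewrite acc_term // sgnB // /c; rng.
  rewrite -mulr_sumr big_mkord.
  by rewrite -/(Dsum L.+1 (th + (2 * j)%:R) L) Dzero // mulr0.
- have hij' : i = j := val_inj hij.
  subst j.
  rewrite (bigD1 i) //= leqnn acc_diag // eqxx big1 ?addr0 // => k hk.
  case: ifP => hki; last by rewrite mul0r.
  rewrite cc_small ?mulr0 // ltn_neqAle hki andbT.
  by move: hk; rewrite -val_eqE.
Qed.

Definition rho (th : R) (N i n : nat) : R :=
  ((N ^_ n)%:R / rising (th + N%:R) n) ^+ 2 * ((i ^_ n)%:R / rising (th + i%:R) n).

Definition beta (th : R) (N i l : nat) : R :=
  if (l <= i)%N then
    i`!%:R * rising th i / rising (th + N%:R) i ^+ 2
    * rising (th + N%:R + N%:R) (i - l) / (i - l)`!%:R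
    * (N ^_ l)%:R ^+ 2 / (l`!%:R * rising th l)
  else 0.


Lemma bc_term (th : R) N j Mm t : 0 < th -> (j + Mm <= N)%N -> (t <= Mm)%N ->
  beta th N (j + Mm) (t + j) * cc th (t + j) j =
  (j + Mm)`!%:R * rising th (j + Mm) / rising (th + N%:R) (j + Mm) ^+ 2
   * (N ^_ j)%:R ^+ 2 / (rising th (j + j) * rising (th + (j + j)%:R) Mm * Mm`!%:R)
   * pst (th + (j + j)%:R) (N - j) (N - j) Mm t.
Proof.
move=> hth hN ht.
have hjN : (j <= N)%N by apply: leq_trans hN; apply: leq_addr.
rewrite /beta ifT; last by rewrite addnC leq_add2l.
rewrite /pst /cc.
have e1 : (j + Mm - (t + j) = Mm - t)%N by rewrite [(t + j)%N]addnC subnDl.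
rewrite e1.
have e2 : th + (j + j)%:R + (N - j)%:R + (N - j)%:R = th + N%:R + N%:R.
  by rewrite natrD !(natrB _ hjN); rng.
rewrite e2.
have e3 : ((N ^_ (t + j)) = N ^_ j * (N - j) ^_ t)%N by rewrite addnC ffactD.
have ef : ((t + j)`! = (t + j) ^_ j * t`!)%N.
  by rewrite -(ffact_fact (leq_addl t j)) addnK.
have eb := bin_fact ht.
have eQ : rising (th + (j + j)%:R) Mm =
   rising (th + (j + j)%:R) t * rising (th + (j + j)%:R + t%:R) (Mm - t).
  by rewrite -rising_add subnKC.
have eP : rising th (t + j) * rising (th + (t + j)%:R) j =
    rising th (j + j) * rising (th + (j + j)%:R) t.
  by rewrite -!rising_add; congr rising; rewrite -addnA addnC.
have pos k (c : R) : 0 < c -> rising c k != 0 by move=> hc; apply: rising_neq0.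
have hU : rising (th + (t + j)%:R) j != 0 by apply: pos; rewrite ltr_wpDr.
have hP : rising th (j + j) != 0 by apply: pos.
have hQ : rising (th + (j + j)%:R) t != 0 by apply: pos; rewrite ltr_wpDr.
have hV : rising (th + (j + j)%:R + t%:R) (Mm - t) != 0 by apply: pos; rewrite ltr_wpDr // ltr_wpDr.
have hI : rising (th + N%:R) (j + Mm) != 0 by apply: pos; rewrite ltr_wpDr.
have eP' : rising th (t + j) = rising th (j + j) * rising (th + (j + j)%:R) t
   / rising (th + (t + j)%:R) j.
  by apply: (mulIf hU); rewrite eP divfK.
rewrite eP' e3 ef -[Mm`!]eb eQ !natrM.
have h1 := fact_neq0 t.
have h2 := fact_neq0 (Mm - t).
have h3 : ((t + j) ^_ j)%:R != 0 :> R by rewrite pnatr_eq0 -lt0n ffact_gt0 leq_addl.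
have h4 : ('C(Mm, t))%:R != 0 :> R by rewrite pnatr_eq0 -lt0n bin_gt0.
move: hU hP hQ hV hI h1 h2 h3 h4.
set U := rising (th + (t + j)%:R) j; set P := rising th (j + j).
set Q := rising (th + (j + j)%:R) t; set V := rising (th + (j + j)%:R + t%:R) (Mm - t).
set I := rising (th + N%:R) (j + Mm).
move=> hU hP hQ hV hI h1 h2 h3 h4.
rewrite !expr2; fld; repeat split; try (by apply/eqP).
Qed.

Lemma bc_final (th : R) N j Mm : 0 < th -> (j + Mm <= N)%N ->
  (j + Mm)`!%:R * rising th (j + Mm) / rising (th + N%:R) (j + Mm) ^+ 2
   * (N ^_ j)%:R ^+ 2 / (rising th (j + j) * rising (th + (j + j)%:R) Mm * Mm`!%:R)
   * (rising (th + (j + j)%:R + (N - j)%:R) Mm * rising (th + (j + j)%:R + (N - j)%:R) Mm)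
  = rho th N (j + Mm) j.
Proof.
move=> hth hN.
have hjN : (j <= N)%N by apply: leq_trans hN; apply: leq_addr.
have e1 : th + (j + j)%:R + (N - j)%:R = th + N%:R + j%:R.
  by rewrite natrD (natrB _ hjN); rng.
rewrite e1 /rho [rising (th + N%:R) (j + Mm)]rising_add.
have ef : ((j + Mm)`! = (j + Mm) ^_ j * Mm`!)%N.
  by rewrite -(ffact_fact (leq_addr Mm j)) addKn.
have pos k (c : R) : 0 < c -> rising c k != 0 by move=> hc; apply: rising_neq0.
have hU : rising (th + (j + Mm)%:R) j != 0 by apply: pos; rewrite ltr_wpDr.
have eP : rising th (j + Mm) = rising th (j + j) * rising (th + (j + j)%:R) Mm
   / rising (th + (j + Mm)%:R) j.
  apply: (mulIf hU); rewrite divfK // -!rising_add; congr rising.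
  by rewrite addnAC.
rewrite eP ef natrM.
have hP : rising th (j + j) != 0 by apply: pos.
have hQ : rising (th + (j + j)%:R) Mm != 0 by apply: pos; rewrite ltr_wpDr.
have hA : rising (th + N%:R) j != 0 by apply: pos; rewrite ltr_wpDr.
have hB : rising (th + N%:R + j%:R) Mm != 0 by apply: pos; rewrite ltr_wpDr // ltr_wpDr.
have h1 := fact_neq0 Mm.
have h3 : ((j + Mm) ^_ j)%:R != 0 :> R by rewrite pnatr_eq0 -lt0n ffact_gt0 leq_addr.
move: hU hP hQ hA hB h1 h3.
set U := rising (th + (j + Mm)%:R) j; set P := rising th (j + j).
set Q := rising (th + (j + j)%:R) Mm; set A := rising (th + N%:R) j.
set B := rising (th + N%:R + j%:R) Mm.
move=> hU hP hQ hA hB h1 h3.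
rewrite !expr2; fld; repeat split; try (by apply/eqP).
Qed.

Lemma BC_entry (th : R) N M (i j : 'I_M) : 0 < th -> (i <= N)%N ->
  \sum_(l < M) beta th N i l * cc th l j = rho th N i j.
Proof.
move=> hth hiN.
have [hij|hij] := ltnP i j.
  rewrite big1 /rho; last first.
    move=> l _; rewrite /beta; case: ifP => hl; last by rewrite mul0r.
    by rewrite cc_small ?mulr0 // (leq_ltn_trans hl hij).
  by rewrite (ffact_small hij) mul0r mulr0.
rewrite -(big_mkord xpredT (fun l => beta th N i l * cc th l j)).
have hiM : (i < M)%N := ltn_ord i.
rewrite (big_cat_nat (leq0n j)) /=; last by rewrite (leq_trans hij) // ltnW.
rewrite big1_seq ?add0r; last first.
  move=> k /andP [_]; rewrite mem_index_iota => /andP [_ hk].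
  by rewrite cc_small ?mulr0.
rewrite (big_cat_nat (leqW hij) hiM) /=.
rewrite [X in _ + X]big1_seq ?addr0; last first.
  move=> k /andP [_]; rewrite mem_index_iota => /andP [hk _].
  by rewrite /beta leqNgt hk mul0r.
have [Mm hM] : exists Mm, val i = (j + Mm)%N by exists (i - j)%N; rewrite subnKC.
rewrite hM in hiN *.
rewrite -{1}(add0n j) big_addn.
have -> : ((j + Mm).+1 - j = Mm.+1)%N by rewrite -addnS addKn.
rewrite (eq_big_nat _ _ (F2 := fun t =>
   (j + Mm)`!%:R * rising th (j + Mm) / rising (th + N%:R) (j + Mm) ^+ 2
   * (N ^_ j)%:R ^+ 2 / (rising th (j + j) * rising (th + (j + j)%:R) Mm * Mm`!%:R)
   * pst (th + (j + j)%:R) (N - j) (N - j) Mm t)); last first.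
  by move=> t /andP [_ ht]; rewrite bc_term.
rewrite -mulr_sumr big_mkord -PS.
exact: bc_final.
Qed.

Lemma bcoef_beta (th : R) N m l : 0 < th -> (l <= m)%N -> (m <= N)%N ->
  \sum_(l <= n < m.+1) rho th N m n * acoef th n l = beta th N m l.
Proof.
move=> hth hlm hmN.
pose Amx := \matrix_(i < m.+1, k < m.+1) (if (k <= i)%N then acoef th i k else 0).
pose Cmx := \matrix_(i < m.+1, j < m.+1) cc th i j.
pose Bmx := \matrix_(i < m.+1, j < m.+1) beta th N i j.
pose Rmx := \matrix_(i < m.+1, j < m.+1) rho th N i j.
have hAC : Amx *m Cmx = 1%:M.
  apply/matrixP => i j; rewrite !mxE -(AC_entry i j hth).
  by apply: eq_bigr => k _; rewrite !mxE.
have hBC : Bmx *m Cmx = Rmx.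
  apply/matrixP => i j; rewrite !mxE -(@BC_entry th N _ i j hth); last first.
    by apply: leq_trans hmN; rewrite -ltnS.
  by apply: eq_bigr => k _; rewrite !mxE.
have hCA := mulmx1C hAC.
have hRA : Rmx *m Amx = Bmx by rewrite -hBC -mulmxA hCA mulmx1.
have := congr1 (fun X : 'M[R]_m.+1 => X ord_max (inord l)) hRA.
rewrite !mxE /= inordK ?ltnS // => <-.
rewrite (eq_bigr (fun n : 'I_m.+1 => rho th N m n * (if (l <= n)%N then acoef th n l else 0))); last first.
  by move=> n _; rewrite !mxE inordK ?ltnS.
rewrite -(big_mkord xpredT (fun n => rho th N m n * (if (l <= n)%N then acoef th n l else 0))).
rewrite [in RHS](big_cat_nat (leq0n l)) /=; last by rewrite ltnW.
rewrite [X in _ = X + _]big1_seq ?add0r; last first.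
  move=> k /andP [_]; rewrite mem_index_iota => /andP [_ hk].
  by rewrite leqNgt hk mulr0.
apply: eq_big_nat => n /andP [hn _].
by rewrite hn.
Qed.

Lemma coef_prod_poly d m (f : 'I_d -> nat -> R) :
  (\prod_(i < d) \poly_(k < m.+1) f i k)`_m =
  \sum_(l : {ffun 'I_d -> 'I_m.+1} | is_comp l) \prod_(i < d) f i (l i).
Proof.
rewrite (eq_bigr (fun i => \sum_(k < m.+1) (f i k)%:P * 'X^k)); last first.
  by move=> i _; rewrite poly_def; apply: eq_bigr => k _; rewrite mul_polyC.
rewrite bigA_distr_bigA coef_sum [RHS]big_mkcond /=.
apply: eq_bigr => l _.
rewrite big_split /= -rmorph_prod prodrXr coefCM coefXn /is_comp eq_sym.
by case: ifP => _; rewrite ?mulr1 ?mulr0.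
Qed.

Definition eqt (n : nat) (p q : {poly R}) := forall k, (k <= n)%N -> p`_k = q`_k.

Lemma eqt_mul n p1 p2 q1 q2 : eqt n p1 q1 -> eqt n p2 q2 -> eqt n (p1 * p2) (q1 * q2).
Proof.
move=> h1 h2 k hk; rewrite !coefM; apply: eq_bigr => j _.
have hj : (j <= k)%N by rewrite -ltnS.
by rewrite h1 ?(leq_trans hj) // h2 // (leq_trans _ hk) // leq_subr.
Qed.

Lemma eqt_prod n I (r : seq I) (P : pred I) (F G : I -> {poly R}) :
  (forall i, P i -> eqt n (F i) (G i)) -> eqt n (\prod_(i <- r | P i) F i) (\prod_(i <- r | P i) G i).
Proof.
move=> h; apply: (big_ind2 (eqt n)).
- by move=> k _.
- by move=> x1 x2 y1 y2; apply: eqt_mul.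
- exact: h.
Qed.

Lemma eqt_trans n p q s : eqt n p q -> eqt n q s -> eqt n p s.
Proof. by move=> h1 h2 k hk; rewrite h1 // h2. Qed.

Definition Hp (m : nat) (c : R) : {poly R} := \poly_(k < m.+1) (rising c k / k`!%:R).

Lemma eqt_H_mul m c1 c2 : eqt m (Hp m c1 * Hp m c2) (Hp m (c1 + c2)).
Proof.
move=> k hk; rewrite coefM coef_poly ltnS hk vand mulr_suml.
apply: eq_bigr => j _.
have hj : (j <= k)%N by rewrite -ltnS.
rewrite !coef_poly ltnS (leq_trans hj hk) ltnS (leq_trans (leq_subr j k) hk).
rewrite -(bin_fact hj) !natrM.
have h1 := fact_neq0 j; have h2 := fact_neq0 (k - j).
have h3 : ('C(k, j))%:R != 0 :> R by rewrite pnatr_eq0 -lt0n bin_gt0.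
move: h1 h2 h3; set A := (j`!)%:R; set B := ((k - j)`!)%:R; set C := ('C(k, j))%:R.
move=> h1 h2 h3; fld; repeat split; try (by apply/eqP).
Qed.

Lemma eqt_H_prod m d (c : 'I_d -> R) :
  eqt m (\prod_(i < d) Hp m (c i)) (Hp m (\sum_(i < d) c i)).
Proof.
apply: (big_ind2 (fun p x => eqt m p (Hp m x))).
- move=> k hk; rewrite coef1 coef_poly ltnS hk.
  case: k hk => [|k] hk; first by rewrite rising0 fact0 divr1.
  by rewrite risingSl mul0r mul0r.
- move=> x1 x2 y1 y2 h1 h2.
  exact: eqt_trans (eqt_mul h1 h2) (eqt_H_mul x2 y2).
- by move=> i _ k hk.
Qed.

Definition Phi (m : nat) (a : R) (r s : nat) : {poly R} :=
  \poly_(k < m.+1) (rising (a + r%:R) k * rising (a + s%:R) k / rising a k / k`!%:R).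
Definition Psi (m : nat) (a : R) (r s : nat) : {poly R} :=
  \poly_(k < m.+1) ((r ^_ k)%:R * (s ^_ k)%:R / rising a k / k`!%:R).

Lemma euler m a r s : 0 < a -> eqt m (Phi m a r s) (Psi m a r s * Hp m (a + r%:R + s%:R)).
Proof.
move=> ha k hk; rewrite coefM coef_poly ltnS hk PS !mulr_suml.
apply: eq_bigr => j _.
have hj : (j <= k)%N by rewrite -ltnS.
rewrite !coef_poly ltnS (leq_trans hj hk) ltnS (leq_trans (leq_subr j k) hk).
rewrite /pst.
have ek : rising a k = rising a j * rising (a + j%:R) (k - j) by rewrite -rising_add subnKC.
rewrite ek -(bin_fact hj) !natrM.
have h1 := fact_neq0 j; have h2 := fact_neq0 (k - j).
have h3 : ('C(k, j))%:R != 0 :> R by rewrite pnatr_eq0 -lt0n bin_gt0.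
have h4 : rising a j != 0 by apply: rising_neq0.
have h5 : rising (a + j%:R) (k - j) != 0 by apply: rising_neq0; rewrite ltr_wpDr.
move: h1 h2 h3 h4 h5; set A := (j`!)%:R; set B := ((k - j)`!)%:R; set C := ('C(k, j))%:R.
set D := rising a j; set E := rising (a + j%:R) (k - j).
move=> h1 h2 h3 h4 h5; fld; repeat split; try (by apply/eqP).
Qed.

Lemma prod_rising_neq0 d (alpha : 'I_d -> R) (l : 'I_d -> nat) :
  (forall i, 0 < alpha i) -> \prod_(i < d) rising (alpha i) (l i) != 0.
Proof. by move=> h; apply/prodf_neq0 => i _; apply: rising_neq0. Qed.

Lemma prod_fact_neq0 d (l : 'I_d -> nat) : \prod_(i < d) ((l i)`!)%:R != 0 :> R.
Proof. by apply/prodf_neq0 => i _; apply: fact_neq0. Qed.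

Lemma sum_shift d (alpha : 'I_d -> R) (r : 'I_d -> nat) N :
  (\sum_(i < d) r i)%N = N -> \sum_(i < d) shift alpha r i = \sum_(i < d) alpha i + N%:R.
Proof. by move=> hr; rewrite /shift big_split /= -natr_sum hr. Qed.

Lemma xi_poly d (alpha : 'I_d -> R) (halpha : forall i, 0 < alpha i) N m r s :
  (\sum_(i < d) r i)%N = N -> (\sum_(i < d) s i)%N = N -> (0 < d)%N ->
  xiH alpha m r s = m`!%:R * rising (\sum_(i < d) alpha i) m
     / rising (\sum_(i < d) alpha i + N%:R) m ^+ 2
     * (\prod_(i < d) Phi m (alpha i) (r i) (s i))`_m.
Proof.
move=> hr hs hd.
have hth : 0 < \sum_(i < d) alpha i.
  rewrite (bigD1 (Ordinal hd)) //=; apply: ltr_wpDr; last exact: halpha.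
  by apply: sumr_ge0 => i _; apply: ltW.
rewrite /Phi coef_prod_poly /xiH mulr_sumr; apply: eq_bigr => l hl.
rewrite /DM (sum_shift alpha hr) (sum_shift alpha hs) /multinom /shift.
rewrite !prodf_div !big_split /=.
have h1 := prod_rising_neq0 (fun i => l i) halpha.
have h2 := prod_fact_neq0 (fun i => l i).
have h3 : rising (\sum_(i < d) alpha i) m != 0 by apply: rising_neq0.
have h4 : rising (\sum_(i < d) alpha i + N%:R) m != 0 by apply: rising_neq0; rewrite ltr_wpDr.
have h5 := fact_neq0 m.
move: h1 h2 h3 h4 h5.
set A := \prod_(i < d) rising (alpha i) (l i).
set B := \prod_(i < d) ((l i)`!)%:R.
set C := rising (\sum_(i < d) alpha i) m.
set D := rising (\sum_(i < d) alpha i + N%:R) m.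
set E := \prod_(i < d) rising (alpha i + (r i)%:R) (l i).
set F := \prod_(i < d) rising (alpha i + (s i)%:R) (l i).
move=> h1 h2 h3 h4 h5.
rewrite expr2; fld; repeat split; try (by apply/eqP).
Qed.

Lemma chi_poly d (alpha : 'I_d -> R) (halpha : forall i, 0 < alpha i) N J r s :
  (J <= N)%N -> (0 < d)%N ->
  chiH alpha N J r s = J`!%:R * rising (\sum_(i < d) alpha i) J / (N ^_ J)%:R ^+ 2
     * (\prod_(i < d) Psi J (alpha i) (r i) (s i))`_J.
Proof.
move=> hJ hd.
have hth : 0 < \sum_(i < d) alpha i.
  rewrite (bigD1 (Ordinal hd)) //=; apply: ltr_wpDr; last exact: halpha.
  by apply: sumr_ge0 => i _; apply: ltW.
rewrite /Psi coef_prod_poly /chiH mulr_sumr; apply: eq_bigr => l hl.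
rewrite /DM /multinom /pl.
rewrite !prodf_div !big_split /=.
have h1 := prod_rising_neq0 (fun i => l i) halpha.
have h2 := prod_fact_neq0 (fun i => l i).
have h3 : rising (\sum_(i < d) alpha i) J != 0 by apply: rising_neq0.
have h4 : (N ^_ J)%:R != 0 :> R by rewrite pnatr_eq0 -lt0n ffact_gt0.
have h5 := fact_neq0 J.
move: h1 h2 h3 h4 h5.
set A := \prod_(i < d) rising (alpha i) (l i).
set B := \prod_(i < d) ((l i)`!)%:R.
set C := rising (\sum_(i < d) alpha i) J.
set D := (N ^_ J)%:R.
set E := \prod_(i < d) ((r i) ^_ (l i))%:R.
set F := \prod_(i < d) ((s i) ^_ (l i))%:R.
move=> h1 h2 h3 h4 h5.
rewrite expr2; fld; repeat split; try (by apply/eqP).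
Qed.

Lemma Psi_trunc m J a r s : (J <= m)%N -> eqt J (Psi m a r s) (Psi J a r s).
Proof.
move=> hJ k hk; by rewrite !coef_poly !ltnS hk (leq_trans hk hJ).
Qed.


Lemma main_sec d (hd : (2 <= d)%N) (alpha : 'I_d -> R) (halpha : forall i, 0 < alpha i)
  (N m : nat) (hm : (m <= N)%N) (r s : 'I_d -> nat)
  (hr : (\sum_(i < d) r i)%N = N) (hs : (\sum_(i < d) s i)%N = N) :
  xiH alpha m r s = \sum_(l < m.+1) bcoef alpha N m l * chiH alpha N l r s.
Proof.
have hd0 : (0 < d)%N by apply: leq_trans hd.
set th := \sum_(i < d) alpha i.
have hth : 0 < th.
  rewrite /th (bigD1 (Ordinal hd0)) //=; apply: ltr_wpDr; last exact: halpha.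
  by apply: sumr_ge0 => i _; apply: ltW.
rewrite (xi_poly halpha m hr hs hd0) -/th.
have hC : \sum_(i < d) (alpha i + (r i)%:R + (s i)%:R) = th + N%:R + N%:R.
  by rewrite !big_split /= -!natr_sum hr hs.
have E1 : (\prod_(i < d) Phi m (alpha i) (r i) (s i))`_m =
    (\prod_(i < d) Psi m (alpha i) (r i) (s i) * Hp m (th + N%:R + N%:R))`_m.
  rewrite -hC.
  have := @eqt_prod m 'I_d (index_enum 'I_d) xpredT (fun i => Phi m (alpha i) (r i) (s i))
    (fun i => Psi m (alpha i) (r i) (s i) * Hp m (alpha i + (r i)%:R + (s i)%:R))
    (fun i _ => euler (r i) (s i) (halpha i)).
  move=> /(_ m (leqnn m)) ->; rewrite big_split /=.
  have h1 : eqt m (\prod_(i < d) Psi m (alpha i) (r i) (s i)) (\prod_(i < d) Psi m (alpha i) (r i) (s i)) by [].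
  exact: (@eqt_mul m _ _ _ _ h1 (@eqt_H_prod m d (fun i => alpha i + (r i)%:R + (s i)%:R)) m (leqnn m)).
rewrite E1 coefM mulr_sumr; apply: eq_bigr => J _.
have hJm : (J <= m)%N by rewrite -ltnS.
have hJN : (J <= N)%N by apply: leq_trans hm.
rewrite (chi_poly halpha r s hJN hd0) -/th.
rewrite (@eqt_prod J 'I_d (index_enum 'I_d) xpredT (fun i => Psi m (alpha i) (r i) (s i))
    (fun i => Psi J (alpha i) (r i) (s i))
    (fun i _ => Psi_trunc (alpha i) (r i) (s i) hJm) J (leqnn J)).
rewrite coef_poly ltnS leq_subr.
have -> : bcoef alpha N m J = beta th N m J.
  by rewrite -bcoef_beta.
rewrite /beta hJm.
set X := (\prod_(i < d) Psi J (alpha i) (r i) (s i))`_J.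
have h1 : rising th J != 0 by apply: rising_neq0.
have h2 : (N ^_ J)%:R != 0 :> R by rewrite pnatr_eq0 -lt0n ffact_gt0.
have h3 := fact_neq0 J.
have h4 := fact_neq0 (m - J).
have h5 : rising (th + N%:R) m != 0 by apply: rising_neq0; rewrite ltr_wpDr.
move: h1 h2 h3 h4 h5.
set A := rising th J; set B := (N ^_ J)%:R; set C := (J`!)%:R; set D := ((m - J)`!)%:R.
set E := rising (th + N%:R) m.
move=> h1 h2 h3 h4 h5.
rewrite !expr2; fld; repeat split; try (by apply/eqP).
Qed.
End Main.

Unset Implicit Arguments.
Set Strict Implicit.

Theorem corollary3p5 (R : realFieldType) (d : nat) (hd : (2 <= d)%N)
  (alpha : 'I_d -> R) (halpha : forall i, 0 < alpha i)
  (N m : nat) (hm : (m <= N)%N)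
  (r s : 'I_d -> nat)
  (hr : (\sum_(i < d) r i)%N = N) (hs : (\sum_(i < d) s i)%N = N) :
  xiH alpha m r s = \sum_(l < m.+1) bcoef alpha N m l * chiH alpha N l r s.
Proof. exact: (main_sec hd halpha hm hr hs). Qed.
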